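(* Let $p$ be a prime, $\mathbb{C}_p$ the field of complex $p$-adic numbers with norm $|\cdot|_p$, $a,b,c\in\mathbb{C}_p$ with $b\neq0$, $c\neq ab$, and $f(x)=\frac{x+a}{bx+c}$ for $x\neq -c/b$. Fix a square root $\sqrt{(c-1)^2+4ab}\in\mathbb{C}_p$ and let $x_{1}=\frac{1-c+\sqrt{(c-1)^2+4ab}}{2b}$, $x_2=\frac{1-c-\sqrt{(c-1)^2+4ab}}{2b}$ (the fixed points of $f$). Assume $$\left|\frac{c-ab}{(bx_i+c)^2}\right|_p=1\ (i=1,2)\qquad\text{and}\qquad \left|\frac{b}{\sqrt{c-ab}}\right|_p<1,$$ and put $\varepsilon_c=\left|\frac{\sqrt{c-ab}}{b}\right|_p-1$. Then: (i) if $\left|\frac{\sqrt{(c-1)^2+4ab}}{b}\right|_p\ge 1+\varepsilon_c$, then $SI(x_1)\cap SI(x_2)=\emptyset$; (ii) otherwise $SI(x_1)=SI(x_2)$.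
   Context: For $x_0\in\mathbb{C}_p$ and $r>0$: $V_r(x_0)=\{x:|x-x_0|_p<r\}$ and $S_r(x_0)=\{x:|x-x_0|_p=r\}$. For a fixed point $x_0$ of $f$, a ball $V_r(x_0)$ (contained in the domain of $f$) is a Siegel disk if every sphere $S_\rho(x_0)$ with $\rho<r$ is invariant, i.e. for every $x\in S_\rho(x_0)$ all iterates $f^n(x)$ are defined and lie in $S_\rho(x_0)$. The maximum Siegel disk $SI(x_0)$ is the union of all Siegel disks centered at $x_0$. *)

(* Defs.v *)
From HB Require Import structures.
From mathcomp Require Import all_boot all_order all_algebra.
From mathcomp Require Import all_classical all_reals.
Set Implicit Arguments. Unset Strict Implicit. Unset Printing Implicit Defensive.
Import Order.TTheory GRing.Theory Num.Theory.
Local Open Scope ring_scope.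
Local Open Scope classical_set_scope.

(* Characterization of (K, absv) as (isometric to) the field C_p of complex
   p-adic numbers: an algebraically closed field K with a non-archimedean
   absolute value absv : K -> R (R the real numbers), whose restriction to the
   naturals (hence to Q) is the p-adic absolute value, which is complete, and
   in which the elements algebraic over Q are dense. *)
Definition is_Cp (p : nat) (R : realType) (K : closedFieldType) (absv : K -> R) : Prop :=
  [/\ (forall x : K, 0 <= absv x),
      (forall x : K, absv x = 0 <-> x = 0),
      (forall x y : K, absv (x * y) = absv x * absv y),
      (forall x y : K, absv (x + y) <= Num.max (absv x) (absv y)) &
    [/\ (forall n : nat, (0 < n)%N -> absv (n%:R) = ((p%:R : R) ^+ (logn p n))^-1),
      (forall u : nat -> K,
          (forall e : R, 0 < e -> exists N : nat, forall m n : nat,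
              (N <= m)%N -> (N <= n)%N -> absv (u m - u n) < e) ->
          exists l : K, forall e : R, 0 < e -> exists N : nat, forall n : nat,
              (N <= n)%N -> absv (u n - l) < e)
    & (forall (x : K) (e : R), 0 < e -> exists y : K,
          (exists q : {poly rat}, q != 0 /\ root (map_poly (fun r : rat => ratr r) q) y)
          /\ absv (x - y) < e)]].

Section Dyn.
Variables (R : realType) (K : closedFieldType) (absv : K -> R) (a b c : K).

Definition mobius (x : K) : K := (x + a) / (b * x + c).
Definition in_dom (x : K) : Prop := x != - c / b.

Definition ballV (x0 : K) (r : R) : set K := [set x | absv (x - x0) < r].
Definition sphereS (x0 : K) (r : R) : set K := [set x | absv (x - x0) = r].

Definition siegel_disk (x0 : K) (r : R) : Prop :=
  [/\ 0 < r, in_dom x0 /\ mobius x0 = x0,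
      (forall x, ballV x0 r x -> in_dom x)
    & (forall rho : R, 0 <= rho -> rho < r -> forall x, sphereS x0 rho x ->
         forall n : nat, in_dom (iter n mobius x) /\ sphereS x0 rho (iter n mobius x))].

Definition SI (x0 : K) : set K :=
  [set x | exists r : R, siegel_disk x0 r /\ ballV x0 r x].
End Dyn.

(* Main.v *)
Require Import Defs.
From HB Require Import structures.
From mathcomp Require Import all_boot all_order all_algebra.
From mathcomp Require Import all_classical all_reals.
From mathcomp Require Import ring lra.
Import Order.TTheory GRing.Theory Num.Theory.
Local Open Scope ring_scope.
Local Open Scope classical_set_scope.

Lemma abs1 {R : realType} {K : closedFieldType} {absv : K -> R}
  (h0 : forall x, 0 <= absv x) (hz : forall x, absv x = 0 <-> x = 0)
  (hm : forall x y, absv (x * y) = absv x * absv y) :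
  absv 1 = 1.
Proof.
have h := hm 1 1; rewrite mulr1 in h.
have nz : absv 1 != 0 by apply/eqP => /hz /eqP; rewrite oner_eq0.
by apply/(mulfI nz); rewrite mulr1 -h.
Qed.

Lemma absN {R : realType} {K : closedFieldType} {absv : K -> R}
  (h0 : forall x, 0 <= absv x) (hz : forall x, absv x = 0 <-> x = 0)
  (hm : forall x y, absv (x * y) = absv x * absv y) (x : K) :
  absv (- x) = absv x.
Proof.
have a1 := abs1 h0 hz hm.
have hn : absv (-1) = 1.
  have h := hm (-1) (-1); rewrite mulrNN mulr1 a1 in h.
  have := h0 (-1); move: h; set t := absv (-1) => h ht.
  have : (t - 1) * (t + 1) = 0 by rewrite mulrDr mulrBl -h; ring.
  move/eqP; rewrite mulf_eq0 => /orP [/eqP|/eqP]; first by move/subr0_eq.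
  move=> e; have : t = -1 by rewrite -[t]subr0 -e; ring.
  by move=> et; move: ht; rewrite et ler0N1.
by rewrite -mulN1r hm hn mul1r.
Qed.

Lemma absV {R : realType} {K : closedFieldType} {absv : K -> R}
  (h0 : forall x, 0 <= absv x) (hz : forall x, absv x = 0 <-> x = 0)
  (hm : forall x y, absv (x * y) = absv x * absv y) (x : K) :
  absv (x^-1) = (absv x)^-1.
Proof.
have [->|nx] := eqVneq x 0; first by rewrite invr0 (proj2 (hz 0) erefl) invr0.
have : absv x * absv x^-1 = 1 by rewrite -hm mulfV // abs1.
have ax : absv x != 0 by apply/eqP => /hz /eqP; rewrite (negbTE nx).
by move=> h; apply/(mulfI ax); rewrite h mulfV.
Qed.

Lemma ultra_strict {R : realType} {K : closedFieldType} {absv : K -> R}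
  (h0 : forall x, 0 <= absv x) (hz : forall x, absv x = 0 <-> x = 0)
  (hm : forall x y, absv (x * y) = absv x * absv y)
  (hmax : forall x y, absv (x + y) <= Num.max (absv x) (absv y)) (u v : K) :
  absv u < absv v -> absv (u + v) = absv v.
Proof.
move=> uv; apply/eqP; rewrite eq_le; apply/andP; split.
  by have := hmax u v; rewrite (max_idPr (ltW uv)).
have := hmax (u + v) (- u); rewrite addrC addKr absN //.
rewrite le_max => /orP [//|h]; by move: (lt_le_trans uv h); rewrite ltxx.
Qed.

Lemma key {R : realType} {K : closedFieldType} {absv : K -> R}
  (h0 : forall x, 0 <= absv x) (hz : forall x, absv x = 0 <-> x = 0)
  (hm : forall x y, absv (x * y) = absv x * absv y)
  (hmax : forall x y, absv (x + y) <= Num.max (absv x) (absv y)) (a b c x0 : K) :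
  b != 0 -> b * x0 + c != 0 -> a = b * x0 ^+ 2 + c * x0 - x0 ->
  absv (c - a * b) = absv (b * x0 + c) ^+ 2 ->
  forall x, absv (x - x0) < absv ((b * x0 + c) / b) ->
  b * x + c != 0 /\ absv (mobius a b c x - x0) = absv (x - x0).
Proof.
move=> hb he ha hcab x hx.
set e := b * x0 + c in he hcab hx.
have aen : absv e != 0 by apply/eqP => /hz /eqP; rewrite (negbTE he).
have abn : absv b != 0 by apply/eqP => /hz /eqP; rewrite (negbTE hb).
have abp : 0 < absv b by rewrite lt_def abn h0.
have hbx : absv (b * (x - x0)) < absv e.
  rewrite hm; move: hx; rewrite hm (absV h0 hz hm) => hx.
  by rewrite ltr_pdivlMr // mulrC in hx.
have eq1 : b * x + c = b * (x - x0) + e by rewrite /e; ring.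
have abx : absv (b * x + c) = absv e by rewrite eq1 (ultra_strict h0 hz hm hmax).
have bxn : b * x + c != 0 by apply/eqP => h; move: abx; rewrite h (proj2 (hz 0) erefl) => /esym/eqP; rewrite (negbTE aen).
split => //.
have a1 : absv (1 - b * x0) = absv e.
  have : absv (1 - b * x0) * absv e = absv e * absv e.
    by rewrite -hm -expr2 -hcab; congr absv; rewrite /e ha; ring.
  by move/(mulIf aen).
have eq2 : mobius a b c x - x0 = (x - x0) * (1 - b * x0) / (b * x + c).
  rewrite /mobius; apply: (mulIf bxn); rewrite mulrBl divfK // divfK // ha; ring.
by rewrite eq2 hm hm (absV h0 hz hm) abx a1 mulfK.
Qed.

Lemma SI_ball {R : realType} {K : closedFieldType} {absv : K -> R}
  (h0 : forall x, 0 <= absv x) (hz : forall x, absv x = 0 <-> x = 0)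
  (hm : forall x y, absv (x * y) = absv x * absv y)
  (hmax : forall x y, absv (x + y) <= Num.max (absv x) (absv y)) (a b c x0 : K) :
  b != 0 -> b * x0 + c != 0 -> a = b * x0 ^+ 2 + c * x0 - x0 ->
  absv (c - a * b) = absv (b * x0 + c) ^+ 2 ->
  SI absv a b c x0 = ballV absv x0 (absv ((b * x0 + c) / b)).
Proof.
move=> hb he ha hcab.
have K0 := key h0 hz hm hmax a b c x0 hb he ha hcab.
have domE : forall x, in_dom b c x <-> b * x + c != 0.
  move=> x; rewrite /in_dom; split => /eqP h; apply/eqP => h'; apply: h.
    by apply: (mulfI hb); rewrite mulrCA divff // mulr1; apply/eqP; rewrite -addr_eq0 h'.
  by rewrite h' mulrCA divff // mulr1 addNr.
have dist : absv (- c / b - x0) = absv ((b * x0 + c) / b).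
  by rewrite -(absN h0 hz hm); congr absv; field.
apply/seteqP; split => x.
  case=> r [[r0 [dx0 fx0] hdom hinv] hx].
  rewrite /ballV /=; apply: (lt_le_trans hx); rewrite leNgt; apply/negP => hr.
  have := hdom (- c / b); rewrite /ballV /= dist => /(_ hr).
  by rewrite /in_dom eqxx.
move=> hx; exists (absv ((b * x0 + c) / b)); split => //; split.
- rewrite lt_def h0 andbT; apply/eqP => /hz /eqP.
  by rewrite mulf_eq0 invr_eq0 (negbTE he) (negbTE hb).
- split; first by apply/domE.
  rewrite /mobius; apply: (mulIf he); rewrite divfK // ha; ring.
- by move=> y /K0 [h _]; apply/domE.
move=> rho rho0 rhoR y hy n.
have hit : sphereS absv x0 rho (iter n (mobius a b c) y).
  elim: n => [//|n IH] /=.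
  rewrite /sphereS /= in IH *.
  by have := rhoR; rewrite -IH => h; have [_ ->] := K0 _ h.
split => //; apply/domE; rewrite /sphereS /= in hit.
by have := rhoR; rewrite -hit => h; have [] := K0 _ h.
Qed.

Lemma fixdata {R : realType} {K : closedFieldType} {absv : K -> R}
  (h0 : forall x, 0 <= absv x) (hz : forall x, absv x = 0 <-> x = 0)
  (hm : forall x y, absv (x * y) = absv x * absv y) (a b c s x : K) :
  s ^+ 2 = c - a * b ->
  absv ((c - a * b) / (b * x + c) ^+ 2) = 1 ->
  b * x + c != 0 /\ absv (c - a * b) = absv (b * x + c) ^+ 2 /\ absv s = absv (b * x + c).
Proof.
move=> hs h.
have en : b * x + c != 0.
  apply/eqP => e; move: h; rewrite e expr0n /= invr0 mulr0.
  by rewrite (proj2 (hz 0) erefl) => /eqP; rewrite eq_sym oner_eq0.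
have ynz : absv ((b * x + c) ^+ 2) != 0.
  by apply/eqP => /hz /eqP; rewrite expf_eq0 (negbTE en) andbF.
have h2 : absv (c - a * b) = absv (b * x + c) ^+ 2.
  move: h; rewrite hm (absV h0 hz hm) => h.
  by rewrite -[absv (c - a * b)](divfK ynz) h mul1r expr2 hm.
split => //; split => //.
apply/eqP; rewrite -(@eqrXn2 _ 2) ?h0 //.
by rewrite -h2 -hs expr2 hm -expr2.
Qed.

Theorem theorem3p3 (p : nat) (R : realType) (K : closedFieldType) (absv : K -> R)
  (a b c D s : K) :
  prime p -> is_Cp p absv ->
  b != 0 -> c != a * b ->
  D ^+ 2 = (c - 1) ^+ 2 + 4 * a * b ->
  s ^+ 2 = c - a * b ->
  let x1 := (1 - c + D) / (2 * b) in
  let x2 := (1 - c - D) / (2 * b) in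
  absv ((c - a * b) / (b * x1 + c) ^+ 2) = 1 ->
  absv ((c - a * b) / (b * x2 + c) ^+ 2) = 1 ->
  absv (b / s) < 1 ->
  let eps_c := absv (s / b) - 1 in
  (1 + eps_c <= absv (D / b) -> SI absv a b c x1 `&` SI absv a b c x2 = set0) /\
  (absv (D / b) < 1 + eps_c -> SI absv a b c x1 = SI absv a b c x2).
Proof.
move=> pp [h0 hz hm hmax [hn _ _]] hb hcab hD hs x1 x2 h1 h2 _ eps_c.
have two : (2 : K) != 0.
  apply/eqP => t; have := hn 2 isT; rewrite t (proj2 (hz 0) erefl) => /esym/eqP.
  rewrite invr_eq0 expf_eq0 pnatr_eq0 andbC.
  by have := prime_gt0 pp; rewrite lt0n => /negbTE ->.
have four : (4 : K) != 0.
  have -> : (4 : K) = 2 * 2 by ring.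
  by rewrite mulf_neq0.
have fixE : forall x, b * x ^+ 2 + (c - 1) * x - a = 0 ->
    a = b * x ^+ 2 + c * x - x.
  by move=> x /eqP; rewrite subr_eq0 => /eqP <-; ring.
have f1 : a = b * x1 ^+ 2 + c * x1 - x1.
  apply: fixE.
  have -> : b * x1 ^+ 2 + (c - 1) * x1 - a = (D ^+ 2 - ((c - 1) ^+ 2 + 4 * a * b)) / (4 * b).
    by rewrite /x1; field; rewrite hb four two.
  by rewrite hD subrr mul0r.
have f2 : a = b * x2 ^+ 2 + c * x2 - x2.
  apply: fixE.
  have -> : b * x2 ^+ 2 + (c - 1) * x2 - a = (D ^+ 2 - ((c - 1) ^+ 2 + 4 * a * b)) / (4 * b).
    by rewrite /x2; field; rewrite hb four two.
  by rewrite hD subrr mul0r.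
have [e1 [c1 s1]] := fixdata h0 hz hm a b c s x1 hs h1.
have [e2 [c2 s2]] := fixdata h0 hz hm a b c s x2 hs h2.
rewrite (SI_ball h0 hz hm hmax a b c x1 hb e1 f1 c1) (SI_ball h0 hz hm hmax a b c x2 hb e2 f2 c2).
have r1 : absv ((b * x1 + c) / b) = absv (s / b) by rewrite !hm s1.
have r2 : absv ((b * x2 + c) / b) = absv (s / b) by rewrite !hm s2.
rewrite r1 r2 /eps_c addrC subrK.
have d12 : x1 - x2 = D / b.
  by rewrite /x1 /x2; field; rewrite hb two.
set r := absv (s / b).
split.
  move=> hr; apply/seteqP; split => // y [/= y1 y2].
  have : absv (x1 - x2) < r.
    have -> : x1 - x2 = (y - x2) + - (y - x1) by ring.
    by apply: (le_lt_trans (hmax _ _)); rewrite gt_max absN // y1 y2.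
  by rewrite d12 ltNge hr.
move=> hr; apply/seteqP; split => y; rewrite /ballV /= => hy.
  have -> : y - x2 = (y - x1) + (x1 - x2) by ring.
  by apply: (le_lt_trans (hmax _ _)); rewrite gt_max hy d12 hr.
have -> : y - x1 = (y - x2) + - (x1 - x2) by ring.
by apply: (le_lt_trans (hmax _ _)); rewrite gt_max hy absN // d12 hr.
Qed.
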